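(* Assume (H0) and (H3). Let $R,r\ge4$ and let $\varphi:\mathbb R^d\to\mathbb R$ be $c$-concave with $|\varphi|\le R$ on $B_{0,r}$. Then $$\sup_{y\in\partial^c\varphi(B_{0,r/2})}\|y\|^{p-1}\le C_{p,\kappa}\big(r^{p-1}+R\big)$$ for a constant $C_{p,\kappa}>0$ depending only on $p$ and $\kappa$.
   Context: (H0): $c(x,y)=h(x-y)$ with $h:\mathbb R^d\to[0,\infty)$ convex, even, lower semi-continuous. (H3): $h(0)=0$ and there exist $p>1$, $\kappa\ge1$, convex differentiable $\omega$ on $(1,\infty)$ with $h(z)=\omega(\|z\|)$ and $\kappa^{-1}\|z\|^{p-1}\le\omega'(\|z\|)\le\kappa\|z\|^{p-1}$ for $\|z\|>1$. $c$-concave: not identically $-\infty$ and $\varphi(x)=\inf_{(y,\lambda)\in\mathcal A}\{c(x,y)-\lambda\}$ for a nonempty $\mathcal A\subseteq\mathbb R^d\times\mathbb R$. $\partial^c\varphi(x)=\{y: c(v,y)-\varphi(v)\ge c(x,y)-\varphi(x)\ \forall v\}$, $\partial^c\varphi(B)=\bigcup_{x\in B}\partial^c\varphi(x)$. *)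

(* Defs.v *)
From HB Require Import structures.
From mathcomp Require Import all_boot all_order all_algebra.
From mathcomp Require Import all_classical all_reals all_analysis.
Set Implicit Arguments. Unset Strict Implicit. Unset Printing Implicit Defensive.
Import Order.TTheory GRing.Theory Num.Theory.
Local Open Scope ring_scope.
Local Open Scope classical_set_scope.

Section Defs.
Variables (R : realType) (d : nat).
Local Notation V := 'rV[R]_d.

Definition enorm (x : V) : R := Num.sqrt (\sum_(i < d) x ord0 i ^+ 2).

Definition cball0 (r : R) : set V := [set x | enorm x <= r].

Definition convex_fun (h : V -> R) : Prop :=
  forall x y (t : R), 0 <= t <= 1 ->
    h (t *: x + (1 - t) *: y) <= t * h x + (1 - t) * h y.

Definition even_fun (h : V -> R) : Prop := forall z, h (- z) = h z.

Definition lsc (h : V -> R) : Prop :=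
  forall x (t : R), t < h x ->
    exists2 delta : R, 0 < delta &
      forall z, enorm (z - x) < delta -> t < h z.

(* (H0) : c(x,y) = h(x-y), h convex, even, lsc, nonnegative *)
Definition H0 (h : V -> R) : Prop :=
  (forall z, 0 <= h z) /\ convex_fun h /\ even_fun h /\ lsc h.

Definition H3 (p kappa : R) (h : V -> R) : Prop :=
  h 0 = 0 /\ 1 < p /\ 1 <= kappa /\
  exists omega : R -> R,
    (forall s1 s2 (t : R), 1 < s1 -> 1 < s2 -> 0 <= t <= 1 ->
        omega (t * s1 + (1 - t) * s2) <= t * omega s1 + (1 - t) * omega s2) /\
    (forall s, 1 < s -> derivable omega s 1) /\
    (forall z, 1 < enorm z -> h z = omega (enorm z)) /\
    (forall z, 1 < enorm z ->
        kappa^-1 * enorm z `^ (p - 1) <= derive1 omega (enorm z) <= kappa * enorm z `^ (p - 1)).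

Definition cost (h : V -> R) (x y : V) : R := h (x - y).

(* phi (real-valued) is c-concave: phi x = inf_{(y,l) in A} (c(x,y) - l), A nonempty *)
Definition c_concave (h : V -> R) (phi : V -> R) : Prop :=
  exists A : set (V * R), A !=set0 /\
    forall x,
      (forall yl, A yl -> phi x <= cost h x yl.1 - yl.2) /\
      (forall e : R, 0 < e -> exists2 yl, A yl & cost h x yl.1 - yl.2 < phi x + e).

Definition c_superdiff (h : V -> R) (phi : V -> R) (x : V) : set V :=
  [set y | forall v, cost h v y - phi v >= cost h x y - phi x].

Definition c_superdiff_set (h : V -> R) (phi : V -> R) (B : set V) : set V :=
  [set y | exists2 x, B x & c_superdiff h phi x y].

End Defs.

(* Main.v *)
Require Import Defs.
From HB Require Import structures.
From mathcomp Require Import all_boot all_order all_algebra.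
From mathcomp Require Import all_classical all_reals all_analysis.
From mathcomp Require Import ring lra.
Import Order.TTheory GRing.Theory Num.Theory.
Local Open Scope ring_scope.

Section Norm.
Variables (R : realType) (d : nat).
Implicit Types a b : 'rV[R]_d.

Lemma sq_sum_ge0 a : 0 <= \sum_(i < d) a ord0 i ^+ 2.
Proof. by apply: sumr_ge0 => i _; exact: sqr_ge0. Qed.

Lemma enorm_ge0 a : 0 <= enorm a.
Proof. exact: sqrtr_ge0. Qed.

Lemma enorm_sqr a : enorm a ^+ 2 = \sum_(i < d) a ord0 i ^+ 2.
Proof. by rewrite /enorm sqr_sqrtr // sq_sum_ge0. Qed.

Lemma enormZ k a : enorm (k *: a) = `|k| * enorm a.
Proof.
rewrite /enorm; under eq_bigr => i _ do rewrite mxE exprMn.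
by rewrite -mulr_sumr sqrtrM ?sqr_ge0 // sqrtr_sqr.
Qed.

Lemma enormN a : enorm (- a) = enorm a.
Proof. by rewrite -scaleN1r enormZ normrN normr1 mul1r. Qed.

Lemma enormB a b : enorm (a - b) = enorm (b - a).
Proof. by rewrite -enormN opprB. Qed.

Lemma CS a b : \sum_(i < d) a ord0 i * b ord0 i <= enorm a * enorm b.
Proof.
set SA := \sum_(i < d) a ord0 i ^+ 2.
set SB := \sum_(i < d) b ord0 i ^+ 2.
set Sab := \sum_(i < d) a ord0 i * b ord0 i.
have hSB : 0 <= SB by exact: sq_sum_ge0.
have key : Sab ^+ 2 <= SA * SB.
  have [SB0|SBpos] := eqVneq SB 0.
    have b0 i : b ord0 i = 0.
      apply/eqP; rewrite -sqrf_eq0; apply/eqP.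
      by apply: (psumr_eq0P _ SB0) => // j _; exact: sqr_ge0.
    have -> : Sab = 0 by apply: big1 => i _; rewrite b0 mulr0.
    by rewrite SB0 mulr0 expr0n.
  have h0 : 0 <= \sum_(i < d) (SB * a ord0 i - Sab * b ord0 i) ^+ 2.
    by apply: sumr_ge0 => i _; exact: sqr_ge0.
  have E : \sum_(i < d) (SB * a ord0 i - Sab * b ord0 i) ^+ 2
         = SB * (SA * SB - Sab ^+ 2).
    rewrite (eq_bigr (fun i => SB ^+ 2 * a ord0 i ^+ 2 - (2 * SB * Sab) * (a ord0 i * b ord0 i)
       + Sab ^+ 2 * b ord0 i ^+ 2)); last by move=> i _; ring.
    rewrite !big_split /= sumrN -!mulr_sumr -/SA -/SB -/Sab; ring.
  rewrite E in h0.
  have SBp : 0 < SB by rewrite lt_def SBpos hSB.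
  by rewrite -subr_ge0; rewrite pmulr_rge0 in h0.
apply: (le_trans (ler_norm Sab)).
rewrite /enorm -sqrtrM ?sq_sum_ge0 // -sqrtr_sqr.
by apply: ler_wsqrtr.
Qed.

Lemma enormD a b : enorm (a + b) <= enorm a + enorm b.
Proof.
have h1 : enorm (a + b) ^+ 2 <= (enorm a + enorm b) ^+ 2.
  rewrite enorm_sqr.
  rewrite (eq_bigr (fun i => a ord0 i ^+ 2 + 2 * (a ord0 i * b ord0 i) + b ord0 i ^+ 2)); last by move=> i _; rewrite mxE; ring.
  rewrite !big_split /= -mulr_sumr -!enorm_sqr.
  have := CS a b; nra.
rewrite -ler_sqr // nnegrE ?enorm_ge0 //.
by rewrite addr_ge0 // enorm_ge0.
Qed.

End Norm.
Arguments enormD {R d}.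
Arguments enormZ {R d}.
Arguments enormB {R d}.
Arguments enorm_ge0 {R d}.

Theorem mainTheorem13 (R : realType) (p kappa : R) :
  1 < p -> 1 <= kappa ->
  exists2 C : R, 0 < C &
    forall (d : nat) (h : 'rV[R]_d -> R),
      H0 h -> H3 p kappa h ->
      forall (Rb r : R) (phi : 'rV[R]_d -> R),
        4 <= Rb -> 4 <= r ->
        c_concave h phi ->
        (forall x : 'rV[R]_d, cball0 r x -> `|phi x| <= Rb) ->
        forall y, c_superdiff_set h phi (cball0 (r / 2)) y ->
          enorm y `^ (p - 1) <= C * (r `^ (p - 1) + Rb).
Proof.
move=> p1 k1.
have k0 : 0 < kappa by apply: lt_le_trans k1.
have P0 : 0 < p - 1 by rewrite subr_gt0.
have pw u v : 0 <= u -> u <= v -> u `^ (p - 1) <= v `^ (p - 1).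
  move=> u0 uv; apply: (ge0_ler_powR (ltW P0)) => //; rewrite nnegrE //.
  exact: le_trans uv.
exists (2 `^ (p - 1) * kappa); first by rewrite mulr_gt0 // powR_gt0.
move=> d h _ [h0 [_ [_ [om [_ [omd [hom homb]]]]]]] Rb r phi R4 r4 _ phib y [x xB sd].
have ex : enorm x <= r / 2 by exact: xB.
set D := enorm (x - y).
set s := r / 2.
set a := D - s.
have s2 : 2 <= s by rewrite /s; lra.
have D0 : 0 <= D by exact: enorm_ge0.
have hyle : enorm y <= r + a.
  have -> : y = x + (y - x) by rewrite addrC subrK.
  apply: (le_trans (enormD _ _)); rewrite enormB -/D /a /s; lra.
have claim : 1 < a -> a `^ (p - 1) <= kappa * Rb.
  move=> a1.
  have Dgt : s + 1 < D by rewrite /a in a1; lra.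
  have Dp : 0 < D by rewrite /s in Dgt; lra.
  set t := s / D.
  have t1 : 1 - t = a / D.
    by rewrite /t /a; field; rewrite gt_eqF.
  have t0 : 0 <= 1 - t by rewrite t1 divr_ge0 //; lra.
  set v := x + t *: (y - x).
  have Ev : v - y = (1 - t) *: (x - y).
    by rewrite /v scalerBl scale1r -[y - x]opprB scalerN addrAC.
  have Eva : enorm (v - y) = a.
    by rewrite Ev enormZ ger0_norm // -/D t1 divfK // gt_eqF.
  have vB : enorm v <= r.
    apply: (le_trans (enormD _ _)); rewrite enormZ enormB -/D ger0_norm.
      by rewrite /t divfK ?gt_eqF // /s; lra.
    by rewrite /t divr_ge0 // /s; lra.
  have : cost h v y - phi v >= cost h x y - phi x := sd v.
  rewrite /cost (hom (v - y)); last by rewrite Eva.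
  have D1 : 1 < D by lra.
  rewrite (hom (x - y)); last exact: D1.
  rewrite Eva -/D => sdv.
  have := phib x; rewrite /cball0 /= => /(_ (le_trans ex _)) px.
  have := phib v vB => pv.
  have /andP[px1 px2] : - Rb <= phi x <= Rb by rewrite -ler_norml px // /s; lra.
  have /andP[pv1 pv2] : - Rb <= phi v <= Rb by rewrite -ler_norml.
  have omb : om D - om a <= 2 * Rb by lra.
  have aD : a < D by rewrite /a /s; lra.
  have [c cI Ec] : exists2 c, c \in `]a, D[%R & om D - om a = derive1 om c * (D - a).
    apply: MVT => //.
      move=> z; rewrite in_itv /= => /andP[az _].
      rewrite derive1E; apply: derivableP; apply: omd; lra.
    apply: derivable_within_continuous => z; rewrite in_itv /= => /andP[az _].
    apply: omd; lra.
  move: cI; rewrite in_itv /= => /andP[ac cD].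
  have zc : enorm ((c / D) *: (x - y)) = c.
    by rewrite enormZ -/D ger0_norm ?divfK ?gt_eqF // divr_ge0 //; lra.
  have := homb ((c / D) *: (x - y)); rewrite zc => /(_ ltac:(lra)) /andP[hb _].
  have Q0 : 0 <= a `^ (p - 1) by exact: powR_ge0.
  have Qc : a `^ (p - 1) <= c `^ (p - 1) by apply: pw; lra.
  have ki : 0 < kappa^-1 by rewrite invr_gt0.
  have X0 : kappa^-1 * a `^ (p - 1) <= derive1 om c.
    apply: le_trans hb; rewrite ler_pM2l //.
  have Ds : D - a = s by rewrite /a; lra.
  rewrite Ds in Ec.
  have X1 : kappa^-1 * a `^ (p - 1) <= Rb.
    have Xn : 0 <= kappa^-1 * a `^ (p - 1) by rewrite mulr_ge0 // ltW.
    nra.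
  have -> : a `^ (p - 1) = kappa * (kappa^-1 * a `^ (p - 1)).
    by rewrite mulrA mulfV ?gt_eqF // mul1r.
  by rewrite ler_pM2l.
have T0 : 0 <= 2 `^ (p - 1) by exact: powR_ge0.
have B0 : 0 <= r `^ (p - 1) by exact: powR_ge0.
have [ra|ar] := leP a r.
  have : enorm y `^ (p - 1) <= (2 * r) `^ (p - 1).
    apply: pw; [exact: enorm_ge0 | lra].
  rewrite powRM //; last by lra.
  move=> H; apply: (le_trans H).
  have : 0 <= 2 `^ (p - 1) * ((kappa - 1) * r `^ (p - 1) + kappa * Rb).
    apply: mulr_ge0 => //; apply: addr_ge0; apply: mulr_ge0; lra.
  lra.
have a0 : 0 <= a by lra.
have Qa := claim ltac:(lra).
have : enorm y `^ (p - 1) <= (2 * a) `^ (p - 1).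
  apply: pw; [exact: enorm_ge0 | lra].
rewrite powRM //.
move=> H; apply: (le_trans H).
have : 2 `^ (p - 1) * (a `^ (p - 1)) <= 2 `^ (p - 1) * (kappa * Rb).
  by rewrite ler_wpM2l.
have : 0 <= 2 `^ (p - 1) * (kappa * r `^ (p - 1)).
  apply: mulr_ge0 => //; apply: mulr_ge0; lra.
lra.
Qed.
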